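(* Let $C$ and $D$ be $R$-linear codes of length $n$, and let $\tilde C\in\{C,C^\perp\}$ and $\tilde D\in\{D,D^\perp\}$. Then \[ \mathrm{CJ}^{\mathrm{av}}_{\tilde C,\tilde D}(x_{ij}\ \text{with}\ i,j\in K)=\frac{1}{|C|^{\delta(C,\tilde C)}\,|D|^{\delta(D,\tilde D)}}\;\Big(T_R^{\delta(C,\tilde C)}\otimes T_R^{\delta(D,\tilde D)}\Big)\,\mathrm{CJ}^{\mathrm{av}}_{C,D}(x_{ij}). \] Here $\delta(C,\tilde C)=0$ if $\tilde C=C$ and $\delta(C,\tilde C)=1$ if $\tilde C=C^\perp$, and similarly for $\delta(D,\tilde D)$. $T_R^0=I$ and $T_R^1=T_R$.
   Context: $R$ denotes either the finite field $\mathbb F_q$ ($q=p^f$, $p$ prime) or the ring $\mathbb Z_k$ of integers modulo $k\ge2$. The elements of $R$ are listed in a fixed order $0=\omega_0,\omega_1,\dots,\omega_{|R|-1}$, and $K=\{0,1,\dots,|R|-1\}$. An $R$-linear code of length $n$ is an $\mathbb F_q$-subspace of $\mathbb F_q^n$ (if $R=\mathbb F_q$) or an additive subgroup of $\mathbb Z_k^n$ (if $R=\mathbb Z_k$). The inner product is $u\cdot v=\sum_{i=1}^n u_iv_i$, and $C^\perp=\{v\in R^n: u\cdot v=0\ \forall u\in C\}$. For $u,v\in R^n$ and $(\alpha,\beta)\in R^2$, set $\eta_{\alpha\beta}(u,v)=\#\{i: (u_i,v_i)=(\alpha,\beta)\}$. The complete joint weight enumerator is \[ \mathrm{CJE}_{C,D}(x_{ij})=\sum_{u\in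 C,v\in D}\prod_{i,j=0}^{|R|-1}x_{ij}^{\eta_{\omega_i\omega_j}(u,v)}, \] where the $x_{ij}$ are indeterminates. For $\sigma\in S_n$ (the symmetric group on $\{1,\dots,n\}$) and $u\in R^n$, let $u^\sigma=(u_{\sigma(1)},\dots,u_{\sigma(n)})$ and $C^\sigma=\{u^\sigma:u\in C\}$. The average complete joint weight enumerator is \[ \mathrm{CJ}^{\mathrm{av}}_{C,D}(x_{ij})=\frac1{n!}\sum_{\sigma\in S_n}\mathrm{CJE}_{C^\sigma,D}(x_{ij}). \] The character $\chi:R\to\mathbb C^\times$ is defined as follows. - If $R=\mathbb Z_k$, then $\chi(\alpha)=e^{2\pi i\alpha/k}$. - If $R=\mathbb F_q$, fix a root $\lambda$ of a primitive irreducible polynomial of degree $f$ over $\mathbb F_p$, and write $\alpha=\alpha_0+\alpha_1\lambda+\dots+\alpha_{f-1}\lambda^{f-1}$ with $\alpha_i\in\mathbb F_p$. Then $\chi(\alpha)=e^{2\pi i\alpha_0/p}$. $T_R=(\chi(\omega_a\omega_b))_{a,b\in K}$. For matrices $A,B$ indexed by $K$, the operator $A\otimes B$ acts on a polynomial in the $x_{ij}$ by the substitution \[ x_{ij}\mapsto\sum_{k,l\in K}A_{ik}B_{jl}\,x_{kl}. \] *)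

(* Defs.v *)
From HB Require Import structures.
From mathcomp Require Import all_boot all_order all_algebra all_fingroup all_field.
From mathcomp Require Import mpoly.
Set Implicit Arguments. Unset Strict Implicit. Unset Printing Implicit Defensive.
Import Order.TTheory GRing.Theory Num.Theory.
Local Open Scope ring_scope.

(* e^{2 pi i / k} in algC: k.-root (-1) is the k-th root of -1 of minimal
   nonnegative argument, i.e. e^{i pi / k}; its square is e^{2 pi i / k}. *)
Definition zeta (k : nat) : algC := (k.-root (-1)) ^+ 2.

Section CJE.
Variables (R : finComNzRingType) (n : nat).

Definition word := {ffun 'I_n -> R}.

Definition zero_word : word := [ffun => 0].
Definition add_word (u v : word) : word := [ffun i => u i + v i].
Definition opp_word (u : word) : word := [ffun i => - u i].
Definition scale_word (a : R) (u : word) : word := [ffun i => a * u i].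

Definition additive_code (C : {set word}) : Prop :=
  zero_word \in C /\ (forall u v, u \in C -> v \in C -> add_word u v \in C)
  /\ (forall u, u \in C -> opp_word u \in C).

Definition linear_code (C : {set word}) : Prop :=
  zero_word \in C /\ (forall u v, u \in C -> v \in C -> add_word u v \in C)
  /\ (forall a u, u \in C -> scale_word a u \in C).

Definition dotp (u v : word) : R := \sum_(i < n) u i * v i.

Definition dual (C : {set word}) : {set word} :=
  [set v | [forall u in C, dotp u v == 0]].

Definition eta (a b : R) (u v : word) : nat :=
  #|[set i : 'I_n | (u i == a) && (v i == b)]|.

Definition NV := #|{: R * R}|.
Definition xv (a b : R) : {mpoly algC[NV]} := 'X_(enum_rank (a, b)).

Definition CJE (C D : {set word}) : {mpoly algC[NV]} :=
  \sum_(u in C) \sum_(v in D) \prod_(ab : R * R) xv ab.1 ab.2 ^+ eta ab.1 ab.2 u v.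

Definition permw (s : 'S_n) (u : word) : word := [ffun i => u (s i)].
Definition permC (s : 'S_n) (C : {set word}) : {set word} := [set permw s u | u in C].

Definition CJav (C D : {set word}) : {mpoly algC[NV]} :=
  (n`!%:R)^-1 *: \sum_(s : 'S_n) CJE (permC s C) D.

(* A (x) B : x_{ab} |-> sum_{c,d} A_{ac} B_{bd} x_{cd} *)
Definition tensop (A B : R -> R -> algC) (P : {mpoly algC[NV]}) : {mpoly algC[NV]} :=
  P \mPo [tuple \sum_(cd : R * R)
            (A (enum_val r).1 cd.1 * B (enum_val r).2 cd.2) *: xv cd.1 cd.2 | r < NV].

Definition Tpow (chi : R -> algC) (d : bool) : R -> R -> algC :=
  fun a b => if d then chi (a * b) else (a == b)%:R.

(* tilde C = C if d = false (delta = 0), C^perp if d = true (delta = 1) *)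
Definition tilde (d : bool) (C : {set word}) : {set word} := if d then dual C else C.

End CJE.

Unset Implicit Arguments.
Definition chiZ (k : nat) (a : 'Z_k) : algC := zeta k ^+ (a : nat).

Definition toF (p : nat) (F : finFieldType) (a : 'F_p) : F := (a : nat)%:R.

(* primitive polynomial of degree f over F_p: irreducible, degree f, and
   the order of X modulo P is p^f - 1 *)
Definition primitive_Fp_poly (p f : nat) (P : {poly 'F_p}) : Prop :=
  irreducible_poly P /\ size P = f.+1 /\
  P %| 'X^(p ^ f - 1) - 1 /\
  (forall m : nat, (0 < m)%N -> (m < p ^ f - 1)%N -> ~~ (P %| 'X^m - 1)).

(* Main.v *)
Require Import Defs.
From HB Require Import structures.
From mathcomp Require Import all_boot all_order all_algebra all_fingroup all_field.
From mathcomp Require Import mpoly.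
From mathcomp Require Import ring.
Set Implicit Arguments. Unset Strict Implicit. Unset Printing Implicit Defensive.
Import Order.TTheory GRing.Theory Num.Theory.
Local Open Scope ring_scope.
Section Generic.
Variables (R : finComNzRingType) (n : nat).
Local Notation word := (word R n).

Lemma tensop_xv (A B : R -> R -> algC) a b :
  tensop A B (xv a b) = \sum_(cd : R * R) (A a cd.1 * B b cd.2) *: xv cd.1 cd.2.
Proof. by rewrite /tensop /xv comp_mpolyXU -tnth_nth tnth_mktuple enum_rankK. Qed.

Definition mono (u v : word) : {mpoly algC[NV R]} :=
  \prod_(ab : R * R) xv ab.1 ab.2 ^+ Defs.eta ab.1 ab.2 u v.

Lemma monoE u v : mono u v = \prod_(l < n) xv (u l) (v l).
Proof.
rewrite (partition_big (fun l => (u l, v l)) predT) //=.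
rewrite /mono; apply: eq_bigr => [[a b]] _ /=.
rewrite (eq_bigr (fun _ => xv a b)); last by move=> l /eqP [-> ->].
rewrite -prodr_const /Defs.eta; apply: eq_bigl => l.
by rewrite inE xpair_eqE.
Qed.
End Generic.
Section Generic2.
Variables (R : finComNzRingType) (n : nat).
Local Notation word := (word R n).

Definition wt (A : R -> R -> algC) (u w : word) : algC := \prod_(l < n) A (u l) (w l).

Lemma tensop_sum (A B : R -> R -> algC) (I : finType) (P : pred I) (F : I -> {mpoly algC[NV R]}) :
  tensop A B (\sum_(i | P i) F i) = \sum_(i | P i) tensop A B (F i).
Proof. by rewrite /tensop raddf_sum. Qed.

Lemma tensopZ (A B : R -> R -> algC) c P : tensop A B (c *: P) = c *: tensop A B P.
Proof. by rewrite /tensop comp_mpolyZ. Qed.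

Lemma tensop_mono (A B : R -> R -> algC) (u v : word) :
  tensop A B (mono u v) =
  \sum_(w : word) \sum_(z : word) (wt A u w * wt B v z) *: mono w z.
Proof.
rewrite monoE /tensop rmorph_prod /=.
rewrite (eq_bigr (fun l => \sum_(cd : R * R) (A (u l) cd.1 * B (v l) cd.2) *: xv cd.1 cd.2));
  last by move=> l _; exact: tensop_xv.
rewrite bigA_distr_bigA /= pair_big /=.
pose h (f : {ffun 'I_n -> R * R}) : word * word := ([ffun l => (f l).1], [ffun l => (f l).2]).
pose g (p : word * word) : {ffun 'I_n -> R * R} := [ffun l => (p.1 l, p.2 l)].
have hK : cancel h g by move=> f; apply/ffunP => l; rewrite !ffunE /= -surjective_pairing.
have gK : cancel g h by move=> [w z]; rewrite /h /g /=; congr pair; apply/ffunP => l; rewrite !ffunE.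
rewrite (reindex h) /=; last by exists g => x _.
apply: eq_bigr => f _.
rewrite scaler_prod monoE /wt -big_split /=.
by congr (_ *: _); apply: eq_bigr => l _; rewrite !ffunE.
Qed.
End Generic2.
Section Generic3.
Variables (R : finComNzRingType) (n : nat).
Local Notation word := (word R n).

Lemma wt_false (chi : R -> algC) (u w : word) : wt (Tpow chi false) u w = (u == w)%:R.
Proof.
rewrite /wt /Tpow; have [->|neq] := eqVneq u w.
  by rewrite big1 // => l _; rewrite eqxx.
have [l hl] : exists l, u l != w l.
  apply/existsP; apply: contraNT neq => /existsPn H; apply/eqP/ffunP => l.
  by apply/eqP; move: (H l); rewrite negbK.
by rewrite (bigD1 l) //= (negbTE hl) mul0r.
Qed.

Definition charsum_prop (chi : R -> algC) (C : {set word}) :=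
  forall w : word, \sum_(u in C) wt (Tpow chi true) u w = #|C|%:R * (w \in dual C)%:R.

Lemma coef_sum chi (d : bool) (C : {set word}) : charsum_prop chi C -> forall w,
  \sum_(u in C) wt (Tpow chi d) u w = (#|C| ^ d)%N%:R * (w \in tilde d C)%:R.
Proof.
move=> hC w; case: d; first by rewrite expn1 hC.
rewrite expn0 mul1r /tilde (eq_bigr (fun u => (u == w)%:R)); last by move=> u _; rewrite wt_false.
case: (boolP (w \in C)) => wC.
  rewrite (bigD1 w) //= eqxx big1 ?addr0 // => u /andP[_ /negbTE ->] //.
rewrite big1 // => u uC; have -> : (u == w) = false; last by [].
by apply/negbTE; apply: contraNneq wC => <-.
Qed.

Lemma tensop_CJE chi (dC dD : bool) (C D : {set word}) :
  charsum_prop chi C -> charsum_prop chi D ->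
  tensop (Tpow chi dC) (Tpow chi dD) (CJE C D) =
  ((#|C| ^ dC * #|D| ^ dD)%N%:R) *: CJE (tilde dC C) (tilde dD D).
Proof.
move=> hC hD.
have E : forall C' D' : {set word}, CJE C' D' = \sum_(u in C') \sum_(v in D') mono u v by [].
rewrite !E tensop_sum.
rewrite (eq_bigr (fun u => \sum_(v in D) \sum_(w : word) \sum_(z : word)
   (wt (Tpow chi dC) u w * wt (Tpow chi dD) v z) *: mono w z)); last first.
  by move=> u _; rewrite tensop_sum; apply: eq_bigr => v _; rewrite tensop_mono.
rewrite (eq_bigr (fun u => \sum_(w : word) \sum_(z : word) \sum_(v in D)
   (wt (Tpow chi dC) u w * wt (Tpow chi dD) v z) *: mono w z)); last first.
  move=> u _; rewrite exchange_big /=; apply: eq_bigr => w _.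
  by rewrite exchange_big.
rewrite exchange_big /=.
rewrite (eq_bigr (fun w => \sum_(z : word)
   (((#|C| ^ dC)%N%:R * (w \in tilde dC C)%:R) * ((#|D| ^ dD)%N%:R * (z \in tilde dD D)%:R)) *: mono w z)); last first.
  move=> w _; rewrite exchange_big /=; apply: eq_bigr => z _.
  rewrite -(coef_sum dC hC w) -(coef_sum dD hD z) mulr_suml scaler_suml.
  apply: eq_bigr => u _; rewrite mulr_sumr scaler_suml; done.
rewrite scaler_sumr; rewrite [in RHS]big_mkcond /=; apply: eq_bigr => w _.
rewrite scaler_sumr [in RHS]big_mkcond /=.
case: (w \in tilde dC C); last by rewrite big1 // => z _; rewrite mulr0 mul0r scale0r.
apply: eq_bigr => z _; case: (z \in tilde dD D); last by rewrite !mulr0 scale0r.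
by rewrite !mulr1 natrM.
Qed.
End Generic3.
Section Avg.
Variables (R : finComNzRingType) (n : nat).
Local Notation word := (word R n).

Lemma permwK (s : 'S_n) : cancel (@permw R n s) (permw s^-1).
Proof. by move=> u; apply/ffunP => l; rewrite !ffunE permKV. Qed.
Lemma permwKV (s : 'S_n) : cancel (@permw R n s^-1) (permw s).
Proof. by move=> u; apply/ffunP => l; rewrite !ffunE permK. Qed.

Lemma mem_permC (s : 'S_n) (X : {set word}) v : (v \in permC s X) = (permw s^-1 v \in X).
Proof.
apply/imsetP/idP => [[v' hv' ->] | h]; first by rewrite permwK.
by exists (permw s^-1 v) => //; rewrite permwKV.
Qed.

Lemma card_permC (s : 'S_n) (X : {set word}) : #|permC s X| = #|X|.
Proof. exact/card_imset/(can_inj (permwK s)). Qed.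

Lemma dotp_perm (s : 'S_n) (u v : word) : dotp (permw s u) (permw s v) = dotp u v.
Proof.
rewrite /dotp (reindex_inj (@perm_inj _ s^-1)) /=.
by apply: eq_bigr => l _; rewrite !ffunE permKV.
Qed.

Lemma dual_permC (s : 'S_n) (X : {set word}) : dual (permC s X) = permC s (dual X).
Proof.
apply/setP => v; rewrite mem_permC /dual !inE.
apply/forall_inP/forall_inP => h u hu.
  by rewrite -(dotp_perm s) permwKV; apply: h; rewrite mem_permC permwK.
by rewrite mem_permC in hu; rewrite -(dotp_perm s^-1); apply: h.
Qed.

Lemma tilde_permC (d : bool) (s : 'S_n) (X : {set word}) : tilde d (permC s X) = permC s (tilde d X).
Proof. by case: d => //=; rewrite dual_permC. Qed.

Lemma tensop_CJav chi (dC dD : bool) (C D : {set word}) :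
  (0 < #|C|)%N -> (0 < #|D|)%N ->
  (forall s : 'S_n, charsum_prop chi (permC s C)) -> charsum_prop chi D ->
  CJav (tilde dC C) (tilde dD D) =
  ((#|C| ^ dC * #|D| ^ dD)%N%:R)^-1 *: tensop (Tpow chi dC) (Tpow chi dD) (CJav C D).
Proof.
move=> C0 D0 hC hD; rewrite /CJav tensopZ tensop_sum.
rewrite [X in _ = _ *: (_ *: X)](eq_bigr (fun s => ((#|C| ^ dC * #|D| ^ dD)%N%:R) *: CJE (permC s (tilde dC C)) (tilde dD D))); last first.
  by move=> s _; rewrite tensop_CJE // card_permC tilde_permC.
rewrite -scaler_sumr !scalerA; congr (_ *: _); rewrite mulrAC mulVf ?mul1r //.
by rewrite pnatr_eq0 -lt0n muln_gt0 !expn_gt0 C0 D0.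
Qed.
End Avg.
Section CharSum.
Variables (R : finComNzRingType) (n : nat).
Local Notation word := (word R n).

Lemma dotpDl (u0 u w : word) : dotp (add_word u0 u) w = dotp u0 w + dotp u w.
Proof. by rewrite /dotp -big_split; apply: eq_bigr => l _; rewrite ffunE mulrDl. Qed.

Lemma charsum_generic (chi : R -> algC) (C : {set word}) :
  (forall a b, chi (a + b) = chi a * chi b) -> chi 0 = 1 ->
  additive_code C ->
  (forall w, w \notin dual C -> exists2 u, u \in C & chi (dotp u w) != 1) ->
  charsum_prop chi C.
Proof.
move=> hadd h0 [C0 [CD CN]] hnt w.
have E : forall u, wt (Tpow chi true) u w = chi (dotp u w).
  move=> u; rewrite /wt /Tpow /dotp.
  by rewrite (big_morph chi hadd h0).
rewrite (eq_bigr _ (fun u _ => E u)).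
case: (boolP (w \in dual C)) => hw.
  rewrite mulr1 (eq_bigr (fun _ => 1)); first by rewrite sumr_const.
  by move=> u uC; move: hw; rewrite inE => /forall_inP /(_ u uC) /eqP ->.
rewrite mulr0; have [u0 u0C hu0] := hnt w hw.
set S := \sum_(u in C) _.
have hinj : injective (add_word u0).
  apply: (can_inj (g := add_word (opp_word u0))) => u.
  by apply/ffunP => l; rewrite !ffunE addKr.
have : S = chi (dotp u0 w) * S.
  rewrite {1}/S (reindex_inj hinj) /= mulr_sumr.
  rewrite (eq_bigl (fun u => u \in C)) => [|u]; last first.
    apply/idP/idP => h; last by apply: CD.
    have -> : u = add_word (opp_word u0) (add_word u0 u).
      by apply/ffunP => l; rewrite !ffunE addKr.
    by apply: CD => //; apply: CN.
  by apply: eq_bigr => u _; rewrite dotpDl hadd.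
move=> /eqP; rewrite -subr_eq0 -{1}(mul1r S) -mulrBl mulf_eq0 subr_eq0 eq_sym (negbTE hu0) /=.
by move/eqP.
Qed.
End CharSum.
Section Zeta.

Lemma norm1_of_pow (y : algC) N : (0 < N)%N -> y ^+ N = 1 -> `|y| = 1.
Proof.
move=> N0 hN; have: `|y| ^+ N = 1 by rewrite -normrX hN normr1.
by move/eqP; rewrite pexpr_eq1 // => /eqP.
Qed.

Lemma norm1_conj (y : algC) : `|y| = 1 -> y * y^* = 1.
Proof. by rewrite -normCK => ->; rewrite expr1n. Qed.

Lemma geom0 (x : algC) N : x ^+ N = 1 -> x != 1 -> \sum_(i < N) x ^+ i = 0.
Proof.
move=> hN hx; have := subrX1 x N; rewrite hN subrr => /esym /eqP.
by rewrite mulf_eq0 subr_eq0 (negbTE hx) /= => /eqP.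
Qed.

Lemma Phi (N : nat) (rho z : algC) : N.-primitive_root z -> `|rho| = 1 ->
  forall a b, (a < N)%N -> (b < N)%N ->
  \sum_(i < N) (rho * z ^+ i) ^+ a * ((rho * z ^+ i)^*) ^+ b = (N * (a == b))%:R.
Proof.
move=> pz hr.
have N0 : (0 < N)%N := prim_order_gt0 pz.
have hz : `|z| = 1 := norm1_of_pow N0 (prim_expr_order pz).
have hy : forall i, (rho * z ^+ i) * (rho * z ^+ i)^* = 1.
  by move=> i; apply: norm1_conj; rewrite normrM normrX hz hr expr1n mulr1.
suff H : forall a b, (b <= a)%N -> (a < N)%N ->
   \sum_(i < N) (rho * z ^+ i) ^+ a * ((rho * z ^+ i)^*) ^+ b = (N * (a == b))%:R.
  move=> a b aN bN; case: (leqP b a) => ab; first exact: H.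
  rewrite -[LHS]conjCK rmorph_sum /=.
  rewrite (eq_bigr (fun i : 'I_N => (rho * z ^+ i) ^+ b * ((rho * z ^+ i)^*) ^+ a)); last first.
    by move=> i _; rewrite rmorphM !rmorphXn /= conjCK mulrC.
  by rewrite H ?(ltnW ab) // conjC_nat eq_sym.
move=> a b ba aN.
rewrite (eq_bigr (fun i : 'I_N => rho ^+ (a - b) * (z ^+ (a - b)) ^+ i)); last first.
  move=> i _; rewrite -{1}(subnK ba) exprD -mulrA -exprMn (hy i) expr1n mulr1.
  by rewrite exprMn -!exprM mulnC.
rewrite -mulr_sumr; case: (eqVneq a b) => [->|nab].
  by rewrite subnn expr0 mul1r (eq_bigr (fun _ => 1)) ?sumr_const ?card_ord ?muln1 // => i _; rewrite expr1n.
rewrite muln0 geom0 ?mulr0 //.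
  by rewrite exprAC (prim_expr_order pz) expr1n.
rewrite -(prim_order_dvd pz); apply/negP => /dvdn_leq.
have : (0 < a - b)%N by rewrite subn_gt0 ltn_neqAle eq_sym nab.
move=> h /(_ h); rewrite leqNgt; move/negP; apply.
by apply: leq_ltn_trans (leq_subr _ _) aN.
Qed.

End Zeta.
Section Zeta2.

Definition Lf (q : {poly algC}) (c y : algC) := (c *+ 2 - y - y^*) * (q.[y] * (q.[y])^*).
Definition Ecoef (q : {poly algC}) (c : algC) : algC :=
  \sum_(a < size q) \sum_(b < size q) q`_a * (q`_b)^* *
     (c *+ 2 * ((a : nat) == b)%:R - (a.+1 == b)%:R - ((a : nat) == b.+1)%:R).

Lemma expandL q c y : Lf q c y = \sum_(a < size q) \sum_(b < size q) q`_a * (q`_b)^* *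
   (c *+ 2 * (y ^+ a * y^* ^+ b) - y ^+ a.+1 * y^* ^+ b - y ^+ a * y^* ^+ b.+1).
Proof.
rewrite /Lf !horner_coef rmorph_sum /= mulr_suml mulr_sumr; apply: eq_bigr => a _.
rewrite mulr_sumr mulr_sumr; apply: eq_bigr => b _.
rewrite rmorphM rmorphXn /= !exprS; ring.
Qed.

Lemma sumL (N : nat) (rho z : algC) (q : {poly algC}) (c : algC) : N.-primitive_root z -> `|rho| = 1 ->
  (size q < N)%N -> \sum_(i < N) Lf q c (rho * z ^+ i) = N%:R * Ecoef q c.
Proof.
move=> pz hr hs.
rewrite (eq_bigr _ (fun (i : 'I_N) _ => expandL q c (rho * z ^+ i))) exchange_big /= /Ecoef mulr_sumr.
apply: eq_bigr => a _; rewrite exchange_big /= mulr_sumr; apply: eq_bigr => b _.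
rewrite -mulr_sumr mulrCA; congr (_ * _).
have aN : (a < N)%N by apply: ltn_trans hs.
have bN : (b < N)%N by apply: ltn_trans hs.
have a1N : (a.+1 < N)%N by apply: leq_ltn_trans hs.
have b1N : (b.+1 < N)%N by apply: leq_ltn_trans hs.
rewrite !sumrB -mulr_sumr !Phi // !natrM; ring.
Qed.

End Zeta2.
Section Zeta3.

Lemma addC_conj (y : algC) : y + y^* = 'Re y *+ 2.
Proof. by rewrite ReE -mulr_natr divfK // pnatr_eq0. Qed.

Lemma sameRe (y r : algC) : `|y| = 1 -> `|r| = 1 -> 'Re y = 'Re r -> y = r \/ y = r^*.
Proof.
move=> hy hr hre.
have Rx : 'Im y * 'Im r \is Num.real by rewrite rpredM ?Creal_Im.
case: (boolP (0 <= 'Im y * 'Im r)) => h.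
  by left; apply: eqC_semipolar => //; rewrite hy hr.
right; apply: eqC_semipolar; first by rewrite norm_conjC hy hr.
  by rewrite Re_conj.
by move: h; rewrite -real_ltNge ?rpred0 // => h; rewrite Im_conj mulrN oppr_ge0 ltW.
Qed.

Lemma neq_N1_1 : (-1 : algC) != 1.
Proof.
apply/eqP => h; have : (1 + 1 : algC) = 0 by rewrite -[X in _ + X]h subrr.
by move/eqP; rewrite -mulr2n pnatr_eq0.
Qed.

Lemma root_param (r z : algC) N : N.-primitive_root z -> r != 0 -> forall y, y ^+ N = r ^+ N ->
  exists i : 'I_N, y = r * z ^+ i.
Proof.
move=> pz r0 y hy.
have : (y / r) ^+ N = 1 by rewrite expr_div_n hy divff // expf_neq0.
move/(prim_rootP pz) => [i hi]; exists i.
by rewrite -hi mulrC divfK.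
Qed.

Lemma key_small k m (r : algC) : (0 < m)%N -> (m < k)%N -> r ^+ k = -1 -> r ^+ m = -1 ->
  (forall y : algC, y ^+ k = -1 -> 'Re y <= 'Re r) -> forall y : algC, y ^+ k = -1 -> y ^+ m = -1.
Proof.
move=> m0 mk hk hm hmax.
have k0 : (0 < k)%N by apply: ltn_trans mk.
have unitk : forall y : algC, y ^+ k = -1 -> `|y| = 1.
  move=> y hy; apply: (norm1_of_pow (N := k.*2)); first by rewrite double_gt0.
  by rewrite -addnn exprD hy mulrNN mulr1.
have hr1 := unitk r hk.
have r0 : r != 0 by rewrite -normr_eq0 hr1 oner_eq0.
have hrc : r * r^* = 1 := norm1_conj hr1.
have hmc : r^* ^+ m = -1 by rewrite -rmorphXn hm rmorphN1.
have [z pz] := C_prim_root_exists k0.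
have [w pw] := C_prim_root_exists m0.
have ReRe : forall y, y ^+ k = -1 -> 'Re y = 'Re r -> y ^+ m = -1.
  by move=> y hy /(sameRe (unitk y hy) hr1) [->|->].
case: (eqVneq r^* r) => hreal.
  have hr2 : r ^+ 2 == 1 by rewrite expr2 -{2}hreal hrc.
  rewrite sqrf_eq1 in hr2; case/orP: hr2 => /eqP hr.
    by move: hm; rewrite hr expr1n => /eqP; rewrite eq_sym (negbTE neq_N1_1).
  move=> y hy; apply: ReRe => //; apply/eqP; rewrite eq_le hmax //= hr.
  have := (leif_Re_Creal (- y)).1; rewrite normrN (unitk y hy) !raddfN /=.
  by rewrite (Creal_ReP _ (rpred1 _)) lerNl.
set c := 'Re r.
pose P : {poly algC} := 'X^m + 1%:P.
have Pr : forall y, P.[y] = y ^+ m + 1 by move=> y; rewrite /P !hornerE.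
pose D : {poly algC} := ('X - r%:P) * ('X - r^*%:P).
have DP : D %| P.
  rewrite Gauss_dvdp ?coprimep_XsubC2 ?subr_eq0 // !dvdp_XsubCl /root !Pr hm hmc addNr eqxx //.
pose q := P %/ D.
have qD : q * D = P := divpK DP.
have D0 : D != 0 by rewrite mulf_neq0 // polyXsubC_eq0.
have sizeq : (size q < m)%N.
  rewrite /q size_divp // size_XnaddC // size_mul ?polyXsubC_eq0 // !size_XsubC /=.
  by rewrite subn2 /= prednK.
have L0 : forall y, y ^+ m = -1 -> Lf q c y = 0.
  move=> y hy; have : (q * D).[y] == 0 by rewrite qD Pr hy addNr.
  rewrite hornerM mulf_eq0 => /orP [/eqP hq|]; first by rewrite /Lf hq mul0r mulr0.
  rewrite /D hornerM mulf_eq0 !hornerXsubC !subr_eq0 => hyr.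
  have hR : 'Re y = c by case/orP: hyr => /eqP ->; rewrite ?Re_conj.
  by rewrite /Lf -addrA -opprD addC_conj hR subrr mul0r.
have E0 : Ecoef q c = 0.
  have := sumL c pw hr1 sizeq.
  rewrite big1 => [/esym/eqP|i _]; last first.
    by apply: L0; rewrite exprMn exprAC (prim_expr_order pw) expr1n mulr1.
  by rewrite mulf_eq0 pnatr_eq0 eqn0Ngt m0 /= => /eqP.
have sizeqk : (size q < k)%N by apply: ltn_trans mk.
have Sk0 := sumL c pz hr1 sizeqk; rewrite E0 mulr0 in Sk0.
have nonneg : forall y, y ^+ k = -1 -> 0 <= Lf q c y.
  move=> y hy; rewrite /Lf -addrA -opprD addC_conj -normCK -mulrnBl.
  by rewrite mulr_ge0 ?exprn_ge0 ?normr_ge0 // mulrn_wge0 // subr_ge0 hmax.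
have Hk : forall i : nat, (r * z ^+ i) ^+ k = -1.
  by move=> i; rewrite exprMn exprAC (prim_expr_order pz) expr1n mulr1.
have all0 := psumr_eq0P (fun (i : 'I_k) _ => nonneg _ (Hk i)) Sk0.
move=> y hy; have [i ->] := root_param pz r0 (etrans hy (esym hk)).
have := all0 i isT; rewrite /Lf => /eqP; rewrite mulf_eq0 => /orP [h|h].
  apply: ReRe; first exact: Hk.
  move: h; rewrite -addrA -opprD addC_conj subr_eq0 eqrMn2r /= => /eqP.
  by rewrite /c => <-.
move: h; rewrite -normCK sqrf_eq0 normr_eq0 => /eqP hq.
have : P.[r * z ^+ i] = 0 by rewrite -qD hornerM hq mul0r.
by rewrite Pr => /eqP; rewrite addr_eq0 => /eqP.
Qed.
End Zeta3.
Section Zeta4.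

Lemma count_contra k m (r : algC) : (0 < m)%N -> (m < k)%N -> r ^+ k = -1 -> r ^+ m = -1 ->
  (forall y : algC, y ^+ k = -1 -> y ^+ m = -1) -> False.
Proof.
move=> m0 mk hk hm hall.
have k0 : (0 < k)%N by apply: ltn_trans mk.
have r0 : r != 0.
  by apply/eqP => h; move: hk; rewrite h expr0n eqn0Ngt k0 /= => /eqP; rewrite eq_sym oppr_eq0 oner_eq0.
have [z pz] := C_prim_root_exists k0.
have [w pw] := C_prim_root_exists m0.
pose Sk := [seq r * z ^+ i | i <- iota 0 k].
pose Sm := [seq r * w ^+ i | i <- iota 0 m].
have uSk : uniq Sk.
  rewrite map_inj_in_uniq ?iota_uniq // => i j; rewrite !mem_iota !add0n => ik jk.
  move/(mulfI r0)/eqP; rewrite (eq_prim_root_expr pz) !modn_small //; exact/eqP.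
have sub : {subset Sk <= Sm}.
  move=> y /mapP [i0 _ ->].
  have hy : (r * z ^+ i0) ^+ k = -1 by rewrite exprMn exprAC (prim_expr_order pz) expr1n mulr1.
  have [j0 ->] := root_param pw r0 (etrans (hall _ hy) (esym hm)).
  by apply: map_f; rewrite mem_iota add0n ltn_ord.
have := uniq_leq_size uSk sub; rewrite !size_map !size_iota.
by rewrite leqNgt mk.
Qed.

Lemma zeta_prim k : (1 < k)%N -> k.-primitive_root (zeta k).
Proof.
move=> k1; have k0 : (0 < k)%N by apply: ltnW.
pose r : algC := k.-root (-1).
have hk : r ^+ k = -1 by rewrite /r rootCK.
have hmax : forall y : algC, y ^+ k = -1 -> 'Re y <= 'Re r.
  move=> y hy; case: (boolP (0 <= 'Im y)) => hI; first exact: rootC_Re_max.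
  rewrite -Re_conj; apply: rootC_Re_max => //; first by rewrite -rmorphXn hy rmorphN1.
  rewrite Im_conj oppr_ge0; move: hI; rewrite -real_ltNge ?rpred0 ?Creal_Im //; exact: ltW.
have h2k : r ^+ (k * 2) = 1 by rewrite exprM hk sqrrN expr1n.
have k20 : (0 < k * 2)%N by rewrite muln_gt0 k0.
have [d pd dk] := prim_order_exists k20 h2k.
suff dk2 : d = (k * 2)%N.
  rewrite dk2 in pd; rewrite /zeta -/r; have := dvdn_prim_root pd (dvdn_mulr 2 (dvdnn k)); rewrite mulKn // => ->.
apply/eqP; apply/negP => /negP dne.
have d0 : (0 < d)%N := prim_order_gt0 pd.
have ndk : ~~ (d %| k)%N by rewrite (prim_order_dvd pd) hk neq_N1_1.
have ev : ~~ odd d.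
  apply: contra ndk => od; move: dk; rewrite Gauss_dvdl //.
  by rewrite coprime_sym coprime2n.
set m := d./2.
have dm : d = m.*2 by rewrite -[LHS](odd_double_half d) (negbTE ev).
have m0 : (0 < m)%N by move: d0; rewrite dm double_gt0.
have mk : (m < k)%N.
  have : (d < k * 2)%N by rewrite ltn_neqAle dne dvdn_leq.
  by rewrite dm muln2 ltn_double.
have hm : r ^+ m = -1.
  have : (r ^+ m) ^+ 2 == 1 by rewrite -exprM muln2 -dm prim_expr_order.
  rewrite sqrf_eq1 => /orP [|/eqP //].
  rewrite -(prim_order_dvd pd) => /(dvdn_leq m0); rewrite dm -addnn.
  by rewrite leqNgt -{1}(addn0 m) ltn_add2l m0.
exact: (count_contra m0 mk hk hm (key_small m0 mk hk hm hmax)).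
Qed.
End Zeta4.
Section Perm_add.
Variables (R : finComNzRingType) (n : nat).
Local Notation word := (word R n).

Lemma additive_permC (s : 'S_n) (C : {set word}) : additive_code C -> additive_code (permC s C).
Proof.
move=> [h0 [hD hN]]; split; [|split].
- by rewrite mem_permC (_ : permw s^-1 _ = zero_word R n) //; apply/ffunP => l; rewrite !ffunE.
- move=> u v; rewrite !mem_permC => hu hv.
  rewrite (_ : permw s^-1 _ = add_word (permw s^-1 u) (permw s^-1 v)); first exact: hD.
  by apply/ffunP => l; rewrite !ffunE.
- move=> u; rewrite !mem_permC => hu.
  rewrite (_ : permw s^-1 _ = opp_word (permw s^-1 u)); first exact: hN.
  by apply/ffunP => l; rewrite !ffunE.
Qed.

Lemma linear_additive (C : {set word}) : linear_code C -> additive_code C.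
Proof.
move=> [h0 [hD hZ]]; split=> //; split=> // u hu.
rewrite (_ : opp_word u = scale_word (-1) u); first exact: hZ.
by apply/ffunP => l; rewrite !ffunE mulN1r.
Qed.

Lemma linear_permC (s : 'S_n) (C : {set word}) : linear_code C -> linear_code (permC s C).
Proof.
move=> [h0 [hD hZ]]; split; [|split].
- by rewrite mem_permC (_ : permw s^-1 _ = zero_word R n) //; apply/ffunP => l; rewrite !ffunE.
- move=> u v; rewrite !mem_permC => hu hv.
  rewrite (_ : permw s^-1 _ = add_word (permw s^-1 u) (permw s^-1 v)); first exact: hD.
  by apply/ffunP => l; rewrite !ffunE.
- move=> a u; rewrite !mem_permC => hu.
  rewrite (_ : permw s^-1 _ = scale_word a (permw s^-1 u)); first exact: hZ.
  by apply/ffunP => l; rewrite !ffunE.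
Qed.

Lemma card_code_gt0 (C : {set word}) : additive_code C -> (0 < #|C|)%N.
Proof. by move=> [h0 _]; apply/card_gt0P; exists (zero_word R n). Qed.

Lemma not_dual (C : {set word}) w : w \notin dual C -> exists2 u, u \in C & dotp u w != 0.
Proof.
rewrite inE => /forall_inPn [u hu h]; by exists u.
Qed.

Lemma main_generic chi (dC dD : bool) (C D : {set word}) :
  additive_code C -> additive_code D ->
  (forall X : {set word}, additive_code X -> charsum_prop chi X) ->
  CJav (tilde dC C) (tilde dD D) =
  ((#|C| ^ dC * #|D| ^ dD)%N%:R)^-1 *: tensop (Tpow chi dC) (Tpow chi dD) (CJav C D).
Proof.
move=> hC hD hall; apply: tensop_CJav; rewrite ?card_code_gt0 //; last exact: hall.
by move=> s; apply/hall/additive_permC.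
Qed.

Lemma main_generic_lin chi (dC dD : bool) (C D : {set word}) :
  linear_code C -> linear_code D ->
  (forall X : {set word}, linear_code X -> charsum_prop chi X) ->
  CJav (tilde dC C) (tilde dD D) =
  ((#|C| ^ dC * #|D| ^ dD)%N%:R)^-1 *: tensop (Tpow chi dC) (Tpow chi dD) (CJav C D).
Proof.
move=> hC hD hall; apply: tensop_CJav.
- exact: card_code_gt0 (linear_additive hC).
- exact: card_code_gt0 (linear_additive hD).
- by move=> s; apply/hall/linear_permC.
- exact: hall.
Qed.

End Perm_add.

Lemma chiZ_add k (a b : 'Z_k) : (1 < k)%N -> chiZ k (a + b) = chiZ k a * chiZ k b.
Proof.
move=> k1; have pz := zeta_prim k1.
have E : forall N x, N = k -> (x %% N = x %% k)%N by move=> N x ->.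
rewrite /chiZ -exprD -(prim_expr_mod pz (a + b)%N); congr (_ ^+ _).
by rewrite /= (E _ _ (Zp_cast k1)).
Qed.

Lemma Zk_part (k n : nat) (C D : {set word 'Z_k n}) (dC dD : bool) :
     (1 < k)%N -> additive_code C -> additive_code D ->
     CJav (tilde dC C) (tilde dD D) =
     ((#|C| ^ dC * #|D| ^ dD)%N%:R)^-1 *:
       tensop (Tpow (@chiZ k) dC) (Tpow (@chiZ k) dD) (CJav C D).
Proof.
move=> k1 hC hD; apply: main_generic => // X hX.
apply: charsum_generic => //.
- by move=> a b; apply: chiZ_add.
- move=> w /not_dual [u hu hne]; exists u => //.
  rewrite /chiZ -(prim_order_dvd (zeta_prim k1)).
  have hlt : (dotp u w < k)%N.
    have E : forall N x, N = k -> (x < N)%N -> (x < k)%N by move=> N x ->.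
    exact: (E _ _ (Zp_cast k1) (ltn_ord (dotp u w))).
  apply/negP => /(dvdn_leq _) h.
  have h0 : (0 < dotp u w)%N by rewrite lt0n; apply: contraNneq hne => hh; apply/eqP; apply: val_inj; rewrite /= hh.
  by move: (h h0); rewrite leqNgt hlt.
Qed.
Section FF.
Variables (F : finFieldType) (p : nat).
Hypotheses (pp : prime p) (pF : p \in [pchar F]).

Lemma natF_mod x : ((x %% p)%:R : F) = x%:R.
Proof. by rewrite [in RHS](divn_eq x p) natrD natrM (pcharf0 pF) mulr0 add0r. Qed.

Let E : forall N x, N = p -> ((x %% N)%:R : F) = x%:R.
Proof. by move=> N x ->; exact: natF_mod. Qed.

Lemma toF_add (a b : 'F_p) : toF p F (a + b) = toF p F a + toF p F b.
Proof. by rewrite /toF /= (@E _ _ (Fp_cast pp)) natrD. Qed.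

Lemma toF_mul (a b : 'F_p) : toF p F (a * b) = toF p F a * toF p F b.
Proof. by rewrite /toF /= (@E _ _ (Fp_cast pp)) natrM. Qed.

Lemma toF_1 : toF p F 1 = 1.
Proof. by rewrite /toF /= (@E _ _ (Fp_cast pp)). Qed.

Lemma toF_zmod : GRing.zmod_morphism (toF p F).
Proof.
move=> a b; apply/eqP; rewrite eq_sym subr_eq -toF_add.
by rewrite subrK.
Qed.

HB.instance Definition _ := GRing.isZmodMorphism.Build 'F_p F (toF p F) toF_zmod.
HB.instance Definition _ := GRing.isMultiplicative.Build 'F_p F (toF p F) (toF_mul, toF_1).

Lemma toF_0 : toF p F 0 = 0.
Proof. exact: rmorph0. Qed.

End FF.
Section FF2.
Variables (F : finFieldType) (p f : nat) (lambda : F) (chi : F -> algC).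
Hypotheses (pp : prime p) (pF : p \in [pchar F]) (cardF : #|F| = (p ^ f)%N)
  (hP : exists P : {poly 'F_p}, primitive_Fp_poly p f P /\ root (map_poly (toF p F) P) lambda)
  (hchi : forall a : nat -> 'F_p,
        chi (\sum_(i < f) toF p F (a i) * lambda ^+ i) = zeta p ^+ (a 0%N : nat)).

Let p1 : (1 < p)%N := prime_gt1 pp.
Let pz := zeta_prim p1.

Let E : forall N x, N = p -> (x %% N = x %% p)%N.
Proof. by move=> N x ->. Qed.

Lemma f_gt0 : (0 < f)%N.
Proof.
rewrite lt0n; apply/eqP => f0; move: cardF; rewrite f0 expn0 => c1.
have : (1 < #|F|)%N by apply/card_gt1P; exists 0, 1; rewrite !inE eq_sym oner_eq0.
by rewrite c1.
Qed.

Definition phi (a : {ffun 'I_f -> 'F_p}) : F := \sum_(i < f) toF p F (a i) * lambda ^+ i.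
Definition aN (a : {ffun 'I_f -> 'F_p}) (i : nat) : 'F_p := if insub i is Some j then a j else 0.

Lemma aN_ord a (i : 'I_f) : aN a i = a i.
Proof. by rewrite /aN valK. Qed.

Lemma chi_phi a : chi (phi a) = zeta p ^+ (aN a 0 : nat).
Proof.
rewrite -hchi /phi; congr (chi _); apply: eq_bigr => i _; by rewrite aN_ord.
Qed.

Lemma zetaFp_add (a b : 'F_p) : zeta p ^+ (nat_of_ord (a + b)) = zeta p ^+ (nat_of_ord a) * zeta p ^+ (nat_of_ord b).
Proof.
rewrite -exprD -(prim_expr_mod pz (nat_of_ord a + nat_of_ord b)%N); congr (_ ^+ _).
by rewrite /= (@E _ _ (Fp_cast pp)).
Qed.

Lemma phi_inj : injective phi.
Proof.
move=> a b hab.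
pose c := [ffun i => a i - b i].
have hc : phi c = 0.
  rewrite /phi (eq_bigr (fun i : 'I_f => toF p F (a i) * lambda ^+ i - toF p F (b i) * lambda ^+ i)).
    by rewrite sumrB -/(phi a) -/(phi b) hab subrr.
  by move=> i _; rewrite ffunE rmorphB /= mulrBl.
suff c0 : forall i, c i = 0.
  by apply/ffunP => i; apply/eqP; rewrite -subr_eq0; move: (c0 i); rewrite ffunE => ->.
pose Q : {poly 'F_p} := \poly_(i < f) aN c i.
have hQ : (map_poly (toF p F) Q).[lambda] = 0.
  rewrite (horner_coef_wide (n := f)); last by rewrite size_map_poly //; exact: size_poly.
  rewrite -[RHS]hc /phi; apply: eq_bigr => i _.
  by rewrite coef_map /= coef_poly ltn_ord aN_ord.
move=> i; apply/eqP/negPn/negP => ci0.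
have Q0 : Q != 0.
  apply/eqP => Q0; move/eqP: ci0; apply.
  by have := congr1 (fun q : {poly 'F_p} => q`_i) Q0; rewrite coef_poly ltn_ord aN_ord coef0.
have [P [[Pirr [Psize _]] Proot]] := hP.
have cop : coprimep P Q.
  rewrite /coprimep; case: (eqVneq (size (gcdp P Q)) 1%N) => // hg.
  have := Pirr.2 _ hg (dvdp_gcdl P Q) => /eqp_dvdl hd.
  have := dvdp_gcdr P Q; rewrite hd => /(dvdp_leq Q0).
  by rewrite Psize leqNgt ltnS size_poly.
rewrite -(coprimep_map (toF p F)) in cop.
by move: (coprimep_root cop Proot); rewrite hQ eqxx.
Qed.

Lemma phi_bij : bijective phi.
Proof.
have := @inj_card_bij _ _ phi phi_inj; apply.
by rewrite card_ffun card_Fp // card_ord cardF.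
Qed.

Lemma chi_add x y : chi (x + y) = chi x * chi y.
Proof.
have [g phiK gK] := phi_bij.
rewrite -[x]gK -[y]gK; set a := g x; set b := g y.
have -> : phi a + phi b = phi [ffun i => a i + b i].
  rewrite /phi -big_split; apply: eq_bigr => i _.
  by rewrite ffunE rmorphD mulrDl.
rewrite !chi_phi /aN insubT ?f_gt0 // => f0 /=.
by rewrite ffunE zetaFp_add.
Qed.

Lemma chi0 : chi 0 = 1.
Proof.
have := hchi (fun _ => 0); rewrite big1 => [->|i _]; last by rewrite (toF_0 pp pF) mul0r.
done.
Qed.

Lemma chi1 : chi 1 != 1.
Proof.
have f0 := f_gt0.
have := hchi (fun i => if i == 0%N then 1 else 0).
rewrite (bigD1 (Ordinal f0)) //= big1 => [|i hi]; last first.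
  by rewrite (_ : (nat_of_ord i == 0%N) = false) ?(toF_0 pp pF) ?mul0r //; apply/negbTE; move: hi; rewrite -val_eqE.
rewrite addr0 (toF_1 pp pF) expr0 mulr1 => ->.
rewrite modn_small // -(prim_order_dvd pz) dvdn1 neq_ltn p1 orbT //.
Qed.

Lemma Fq_part n (C D : {set word F n}) (dC dD : bool) :
  linear_code C -> linear_code D ->
  CJav (tilde dC C) (tilde dD D) =
     ((#|C| ^ dC * #|D| ^ dD)%N%:R)^-1 *:
       tensop (Tpow chi dC) (Tpow chi dD) (CJav C D).
Proof.
move=> hC hD; apply: main_generic_lin => // X hX.
apply: charsum_generic; [exact: chi_add | exact: chi0 | exact: linear_additive |].
move=> w /not_dual [u hu hne]; exists (scale_word (dotp u w)^-1 u).
  by case: hX => _ [_ hZ]; apply: hZ.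
have -> : dotp (scale_word (dotp u w)^-1 u) w = 1.
  rewrite /dotp (eq_bigr (fun l => (dotp u w)^-1 * (u l * w l))); last first.
    by move=> l _; rewrite ffunE mulrA.
  by rewrite -mulr_sumr -/(dotp u w) mulVf.
exact: chi1.
Qed.

End FF2.

Theorem mainTheorem2 :
  (* R = Z_k, k >= 2, codes = additive subgroups *)
  (forall (k n : nat) (C D : {set word 'Z_k n}) (dC dD : bool),
     (1 < k)%N -> additive_code C -> additive_code D ->
     CJav (tilde dC C) (tilde dD D) =
     ((#|C| ^ dC * #|D| ^ dD)%N%:R)^-1 *:
       tensop (Tpow (@chiZ k) dC) (Tpow (@chiZ k) dD) (CJav C D))
  /\
  (* R = F_q, q = p^f, lambda a root of a primitive irreducible polynomial of
     degree f over F_p, chi(alpha_0 + alpha_1 lambda + ...) = e^{2 pi i alpha_0 / p} *)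
  (forall (F : finFieldType) (p f : nat) (lambda : F) (chi : F -> algC)
          (n : nat) (C D : {set word F n}) (dC dD : bool),
     prime p -> p \in [pchar F] -> #|F| = (p ^ f)%N ->
     (exists P : {poly 'F_p}, primitive_Fp_poly p f P /\ root (map_poly (@toF p F) P) lambda) ->
     (forall a : nat -> 'F_p,
        chi (\sum_(i < f) toF p F (a i) * lambda ^+ i) = zeta p ^+ (a 0%N : nat)) ->
     linear_code C -> linear_code D ->
     CJav (tilde dC C) (tilde dD D) =
     ((#|C| ^ dC * #|D| ^ dD)%N%:R)^-1 *:
       tensop (Tpow chi dC) (Tpow chi dD) (CJav C D)).
Proof.
split; first exact: Zk_part.
move=> F p f lambda chi n C D dC dD pp pF cF hP hchi hC hD.
exact: (Fq_part pp pF cF hP hchi).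
Qed.
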